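(* Let $\gamma\ge1$ and let $b_1,b_2\in\mathbb{C}$ with $\operatorname{Re}(b_j)\ge\gamma$ for $j=1,2$. For $\operatorname{Re}(z)\ge0$ let $\psi_j(z)=1/(z+b_j)$ and $\theta=\psi_1\circ\psi_2$. Then for all $z,w\in\mathbb{C}$ with $\operatorname{Re}(z)\ge0$ and $\operatorname{Re}(w)\ge0$, $$|\theta(z)-\theta(w)|\le(\gamma^2+1)^{-2}|z-w|.$$ *)

(* Defs.v *)
From mathcomp Require Import all_boot all_order all_algebra.
From mathcomp Require Import complex.
From mathcomp Require Import reals.
Set Implicit Arguments. Unset Strict Implicit. Unset Printing Implicit Defensive.
Import Order.TTheory GRing.Theory Num.Theory ComplexField.
Local Open Scope ring_scope.
Local Open Scope complex_scope.

Definition psi (R : rcfType) (b z : R[i]) : R[i] := (z + b)^-1.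

Definition theta (R : rcfType) (b1 b2 z : R[i]) : R[i] := psi b1 (psi b2 z).

(* Main.v *)
Require Import Defs.
From mathcomp Require Import all_boot all_order all_algebra.
From mathcomp Require Import complex.
From mathcomp Require Import reals.
From mathcomp Require Import ring lra.
Import Order.TTheory GRing.Theory Num.Theory ComplexField.
Local Open Scope ring_scope.
Local Open Scope complex_scope.

Lemma key (R : rcfType) (g : R) (b u : R[i]) :
  1 <= g -> g <= complex.Re b -> g <= complex.Re u ->
  (g ^+ 2 + 1)%:C <= `|1 + b * u|.
Proof.
move=> g1; case: b => a t; case: u => c s /= ga gc.
rewrite -(@ler_sqr _ _ _) ?nnegrE ?normr_ge0 //; last by rewrite ler0c; nra.
rewrite -add_Re2_Im2 -rmorphXn lecR /=.
have h1 : t^+2 <= t^+2 * c^+2 by rewrite ler_peMr ?sqr_ge0 //; nra.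
have h2 : s^+2 <= a^+2 * s^+2 by rewrite ler_peMl ?sqr_ge0 //; nra.
have h3 : g^+2 <= a * c by nra.
have h4 : (g^+2+1)^+2 <= (a*c+1)^+2 by rewrite ler_sqr ?nnegrE; nra.
have h5 : 0 <= (t - s)^+2 by apply: sqr_ge0.
have h6 : 0 <= (t * s)^+2 by apply: sqr_ge0.
nra.
Qed.

Theorem lemma5p1 (R : realType) (gamma : R) (b1 b2 : R[i]) :
  1 <= gamma -> gamma <= complex.Re b1 -> gamma <= complex.Re b2 ->
  forall z w : R[i], 0 <= complex.Re z -> 0 <= complex.Re w ->
    `|theta b1 b2 z - theta b1 b2 w|
      <= ((gamma ^+ 2 + 1) ^- 2)%:C * `|z - w|.
Proof.
move=> g1 gb1 gb2 z w hz hw.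
set u := z + b2; set v := w + b2.
have hu : gamma <= complex.Re u by rewrite /u raddfD /=; lra.
have hv : gamma <= complex.Re v by rewrite /v raddfD /=; lra.
have nz (x : R[i]) : gamma <= complex.Re x -> x != 0.
  by move=> hx; apply/eqP => x0; move: hx; rewrite x0 /=; lra.
have pos : (0 : R[i]) < (gamma ^+ 2 + 1)%:C by rewrite ltcR; nra.
have kA := @key R gamma b1 u g1 gb1 hu; have kB := @key R gamma b1 v g1 gb1 hv.
have nA : 1 + b1 * u != 0.
  by apply/eqP => e; move: kA; rewrite e normr0 => /(lt_le_trans pos); rewrite ltxx.
have nB : 1 + b1 * v != 0.
  by apply/eqP => e; move: kB; rewrite e normr0 => /(lt_le_trans pos); rewrite ltxx.
have nu := nz _ hu; have nv := nz _ hv.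
have E : theta b1 b2 z - theta b1 b2 w = (z - w) / ((1 + b1 * u) * (1 + b1 * v)).
  rewrite /theta /psi -/u -/v.
  have -> : z - w = u - v by rewrite /u /v; ring.
  field.
  by rewrite nA nB nu nv.
rewrite E normrM normrV ?unitfE ?mulf_neq0 // mulrC normrM.
apply: ler_wpM2r; first exact: normr_ge0.
rewrite rmorphV ?unitfE ?expf_neq0 ?lt0r_neq0 //=; last by nra.
rewrite rmorphXn /=.
rewrite lef_pV2 ?posrE ?exprn_gt0 ?mulr_gt0 ?(lt_le_trans pos) //.
by rewrite expr2 ler_pM // ltW.
Qed.
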